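(* Let $p$ be a prime, $a\in\mathbb{Q}_p$, $a\ne0$, with $\sqrt{-a}\in\mathbb{Q}_p$, $A=|a|_p$, and $f(x)=\frac{ax}{x^2+a}$ on $\mathbb{Q}_p$. For every $r\in\{p^k:k\in\mathbb Z\}$ with $0<r<\sqrt A$, the measure-preserving dynamical system $(S_r(0),f,\mu)$ is not ergodic, where $\mu$ is the normalized Haar measure on $S_r(0)$.
   Context: $S_r(0)=\{x\in\mathbb{Q}_p:|x|_p=r\}$, equipped with the $\sigma$-algebra generated by its closed balls. The normalized Haar measure $\mu$ on $S_r(0)$ is the probability measure with $\mu(V_\rho(c))=\frac{p\rho}{r(p-1)}$ for every closed ball $V_\rho(c)=\{x:|x-c|_p\le\rho\}\subset S_r(0)$; $f$ maps $S_r(0)$ to itself and preserves $\mu$. A measure-preserving system is ergodic if every measurable set $V$ with $f^{-1}(V)=V$ (invariant set) has $\mu(V)\in\{0,1\}$. *)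

(* Defs.v *)
From HB Require Import structures.
From mathcomp Require Import all_boot all_order all_algebra.
From mathcomp Require Import all_classical all_reals all_analysis.

Set Implicit Arguments.
Unset Strict Implicit.
Unset Printing Implicit Defensive.

Import Order.TTheory GRing.Theory Num.Theory.
Local Open Scope classical_set_scope.
Local Open Scope ring_scope.

(* The p-adic absolute value on the rationals, |x|_p = p^(-v_p(x)),
   with v_p(x) = v_p(numerator) - v_p(denominator), and |0|_p = 0. *)
Definition padic_abs_rat (R : realType) (p : nat) (x : rat) : R :=
  if x == 0 then 0
  else (p%:R : R) ^ ((logn p `|denq x|%N)%:Z - (logn p `|numq x|%N)%:Z).

(* (K, abs) is a model of the field of p-adic numbers Q_p: a field with a
   non-archimedean absolute value [abs] extending the p-adic absolute value
   of Q (via the canonical embedding [ratr]), complete, and in which Q is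
   dense.  This is exactly "the completion of Q w.r.t. |.|_p", and
   determines (K, abs) up to isometric field isomorphism. *)
Definition is_Qp (R : realType) (p : nat) (K : fieldType) (abs : K -> R) : Prop :=
  (forall x, 0 <= abs x) /\
      (forall x, abs x = 0 <-> x = 0) /\
      (forall x y, abs (x * y) = abs x * abs y) /\
      (forall x y, abs (x + y) <= Num.max (abs x) (abs y)) /\
      (forall q : rat, abs (ratr q) = padic_abs_rat R p q) /\
      (forall u : nat -> K,
          (forall e : R, 0 < e -> exists N, forall m n, (N <= m)%N -> (N <= n)%N ->
               abs (u m - u n) < e) ->
          exists l : K, forall e : R, 0 < e -> exists N, forall n, (N <= n)%N ->
               abs (u n - l) < e) /\
      (forall (x : K) (e : R), 0 < e -> exists q : rat, abs (x - ratr q) < e).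

Definition sphere (R : realType) (K : fieldType) (abs : K -> R) (r : R) : set K :=
  [set x | abs x = r].
Definition cball (R : realType) (K : fieldType) (abs : K -> R) (c : K) (rho : R) : set K :=
  [set x | abs (x - c) <= rho].

(* the closed balls contained in S_r(0) (radii are values of |.|_p, i.e. p^k);
   these generate the sigma-algebra *)
Definition sphere_balls (R : realType) (p : nat) (K : fieldType) (abs : K -> R) (r : R)
  : set (set K) :=
  [set B | exists (c : K) (k : int),
      B = cball abs c ((p%:R : R) ^ k) /\ cball abs c ((p%:R : R) ^ k) `<=` sphere abs r].

(* K viewed as a pointed type (base point 0), needed to build the
   measurable space of the sigma-algebra generated by [sphere_balls]. *)
Definition ptK (K : fieldType) : Type := K.
HB.instance Definition _ (K : fieldType) := Choice.on (ptK K).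
HB.instance Definition _ (K : fieldType) := isPointed.Build (ptK K) (0 : K).

(* the measurable space: K with the sigma-algebra generated by the closed
   balls contained in S_r(0); its trace on S_r(0) is the sigma-algebra of
   S_r(0) generated by its closed balls *)
Definition Ssigma (R : realType) (p : nat) (K : fieldType) (abs : K -> R) (r : R) :=
  g_sigma_algebraType (sphere_balls p abs r : set (set (ptK K))).

(* Main.v *)
Require Import Defs.
From HB Require Import structures.
From mathcomp Require Import all_boot all_order all_algebra.
From mathcomp Require Import all_classical all_reals all_analysis.
From mathcomp Require Import ring lra.
Import Order.TTheory GRing.Theory Num.Theory.
Local Open Scope classical_set_scope.
Local Open Scope ring_scope.
Set Implicit Arguments.
Unset Strict Implicit.

Section AbsFacts.
Variables (R : realType) (K : fieldType) (abs : K -> R).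
Hypothesis h0 : forall x, 0 <= abs x.
Hypothesis hz : forall x, abs x = 0 <-> x = 0.
Hypothesis hm : forall x y, abs (x * y) = abs x * abs y.
Hypothesis hu : forall x y, abs (x + y) <= Num.max (abs x) (abs y).

Lemma abs1 : abs 1 = 1.
Proof using h0 hz hm hu.
clear hu h0.
have h := hm 1 1; rewrite mulr1 in h.
have n0 : abs 1 != 0 by apply/eqP => /hz /eqP; rewrite oner_eq0.
by apply: (mulfI n0); rewrite -h mulr1.
Qed.

Lemma absN x : abs (- x) = abs x.
Proof using h0 hz hm hu.
have hN1 : abs (-1) = 1.
  have h := hm (-1) (-1); rewrite mulrNN mulr1 abs1 in h.
  have := h0 (-1); move: h; set t := abs (-1) => h ht.
  have ht1 : t * t = 1 by rewrite h.
  nra.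
by rewrite -mulN1r hm hN1 mul1r.
Qed.

Lemma absV x : abs (x^-1) = (abs x)^-1.
Proof using h0 hz hm hu.
have [->|nx] := eqVneq x 0; first by rewrite invr0 (proj2 (hz 0) erefl) invr0.
have : abs x * abs x^-1 = 1 by rewrite -hm mulfV // abs1.
move=> h; have ax : abs x != 0 by apply/eqP => /hz /eqP; rewrite (negbTE nx).
by rewrite -[abs x^-1]mul1r -(mulVf ax) -mulrA h mulr1.
Qed.

Lemma absD x y : abs (x / y) = abs x / abs y.
Proof using h0 hz hm hu. by rewrite hm absV. Qed.

Lemma absX x n : abs (x ^+ n) = abs x ^+ n.
Proof using h0 hz hm hu. elim: n => [|n IH]; by rewrite ?expr0 ?abs1 // !exprS hm IH. Qed.

Lemma absXz x (k : int) : abs (x ^ k) = abs x ^ k.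
Proof using h0 hz hm hu. case: k => n; by rewrite ?NegzE ?invr_expz ?exprz_inv // ?absV absX. Qed.

Lemma ultra_eq y z : abs y < abs z -> abs (y + z) = abs z.
Proof using h0 hz hm hu.
move=> lt; apply/eqP; rewrite eq_le; apply/andP; split.
  by apply: (le_trans (hu _ _)); rewrite ge_max lexx (ltW lt).
have := hu (y + z) (- y); rewrite addrC addKr absN => H.
rewrite leNgt; apply/negP => lt2; move: H; rewrite le_max !leNgt lt2 lt //.
Qed.

Lemma ultra_sub x y z : abs (x - z) <= Num.max (abs (x - y)) (abs (y - z)).
Proof using h0 hz hm hu. by have := hu (x - y) (y - z); rewrite addrA subrK. Qed.
End AbsFacts.
Lemma padp (R : realType) p : prime p -> padic_abs_rat R p p%:R = (p%:R)^-1.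
Proof. move=> hp. rewrite /padic_abs_rat.
have -> : (p%:R : rat) == 0 = false by rewrite pnatr_eq0; case: p hp => [|].
have := numq_int p; have := denq_int p; rewrite -pmulrn => -> ->.
rewrite logn1 (logn_prime _ hp) eqxx /=.
by rewrite sub0r -exprz_inv expr1z.
Qed.

Theorem theorem3p5 (R : realType) (p : nat) (K : fieldType) (abs : K -> R)
  (hp : prime p) (hK : is_Qp p abs)
  (a : K) (ha : a != 0) (hsq : exists s : K, s * s = - a)
  (r : R) (hr : exists k : int, r = (p%:R : R) ^ k)
  (hr0 : 0 < r) (hrA : r < Num.sqrt (abs a))
  (mu : {measure set (Ssigma p abs r) -> \bar R})
  (hmu : forall (c : K) (k : int),
      cball abs c ((p%:R : R) ^ k) `<=` sphere abs r ->
      mu (cball abs c ((p%:R : R) ^ k))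
        = ((p%:R * (p%:R : R) ^ k) / (r * (p%:R - 1)))%:E) :
  let f := fun x : K => a * x / (x ^+ 2 + a) in
  ~ (forall V : set (Ssigma p abs r),
        measurable V -> V `<=` sphere abs r ->
        sphere abs r `&` (f @^-1` V) = V ->
        mu V = 0%E \/ mu V = 1%E).
Proof.
move=> f H.
case: hK => h0 [hz [hm [hu [hrat [_ hdense]]]]].
case: hr => k0 Ek0.
case: hsq => s Es.
have p1 : (1 < (p%:R : R)) by rewrite ltr1n prime_gt1.
have p0 : (0 < (p%:R : R)) by apply: lt_trans p1.
have absp : abs (p%:R : K) = (p%:R)^-1.
  by rewrite -(ratr_nat K p) hrat padp.
pose c := ((p%:R : K)^-1) ^ k0.
have absc : abs c = r by rewrite /c (absXz h0 hz hm hu) (absV h0 hz hm hu) absp invrK Ek0.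
have sn0 : s != 0.
  apply/eqP => s0; move: Es; rewrite s0 mul0r => /eqP; rewrite eq_sym oppr_eq0.
  by rewrite (negbTE ha).
have abss0 : 0 < abs s.
  by rewrite lt_neqAle h0 andbT eq_sym; apply/eqP => /hz /eqP; rewrite (negbTE sn0).
have [q hq] := hdense s (abs s) abss0.
have absq : abs (ratr q) = abs s.
  have := ultra_eq h0 hz hm hu (y := ratr q - s) (z := s).
  rewrite subrK; apply; by rewrite -opprB (absN h0 hz hm hu).
have [j Ej] : exists j : int, abs s = (p%:R : R) ^ j.
  move: absq; rewrite hrat /padic_abs_rat.
  case: eqP => [_ E|_ E]; first by move: abss0; rewrite -E ltxx.
  by eexists; rewrite -E.
have absa : abs a = abs s ^+ 2.
  by rewrite -(absN h0 hz hm hu) -Es hm expr2.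
have hrs : r < abs s.
  by move: hrA; rewrite absa sqrtr_sqr ger0_norm.
have kj : (k0 < j)%R by move: hrs; rewrite Ek0 Ej ltr_eXz2l.
have prs : p%:R * r <= abs s.
  rewrite Ek0 Ej -[X in X * _]expr1z -expfzDr ?gt_eqF //.
  by rewrite ler_eXz2l // addrC -ltzD1 ltrD2r.
pose rho := (p%:R : R) ^ (k0 - 2%:Z).
have rhoE : rho * (p%:R ^+ 2) = r.
  rewrite /rho Ek0 (_ : (p%:R : R) ^+ 2 = p%:R ^ (2%:Z)) //.
  by rewrite -expfzDr ?gt_eqF // subrK.
have rho0 : 0 < rho by rewrite /rho exprz_gt0.
have rhor : rho < r.
  rewrite -rhoE; have : 1 < (p%:R : R) ^+ 2 by rewrite exprn_egt1.
  nra.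
have key : forall x, abs x = r -> abs (f x - x) <= rho.
  move=> x ax.
  have ax2 : abs (x ^+ 2) < abs a.
    by rewrite (absX h0 hz hm hu) ax absa ltr_pXn2r // ?nnegrE ?h0 ?(ltW hr0).
  have aden : abs (x ^+ 2 + a) = abs a by apply: (ultra_eq h0 hz hm hu).
  have den0 : x ^+ 2 + a != 0.
    apply/eqP => /hz; rewrite aden => /hz /eqP; by rewrite (negbTE ha).
  have -> : f x - x = - (x ^+ 3) / (x ^+ 2 + a).
    rewrite /f; field; exact: den0.
  rewrite (absD h0 hz hm hu) (absN h0 hz hm hu) (absX h0 hz hm hu) aden ax.
  have a0 : 0 < abs a by rewrite absa exprn_gt0.
  rewrite ler_pdivrMr //.
  have : (p%:R * r) ^+ 2 <= abs a.
    by rewrite absa ler_pXn2r // ?nnegrE ?h0 // mulr_ge0 // ltW.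
  move: rhoE; set P := (p%:R : R) ^+ 2 => rE; rewrite exprMn -/P => hP.
  have -> : r ^+ 3 = rho * (P * r ^+ 2) by rewrite mulrA rE; ring.
  by rewrite ler_pM2l.
pose V := cball abs c rho.
have Vsub : V `<=` sphere abs r.
  move=> x; rewrite /V /cball /sphere /= => hx.
  rewrite -absc -[x](subrK c); apply: (ultra_eq h0 hz hm hu).
  by rewrite absc; apply: le_lt_trans hx rhor.
have Vball : V = cball abs c ((p%:R : R) ^ (k0 - 2%:Z)) by [].
have := H V.
have Vmeas : measurable (V : set (Ssigma p abs r)).
  apply: sub_gen_smallest; exists c, (k0 - 2%:Z); split => //.
have Vinv : sphere abs r `&` (f @^-1` V) = V.
  apply/seteqP; split => x.
    move=> [hx hfx]; rewrite /V /cball /=.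
    apply: le_trans (ultra_sub h0 hz hm hu x (f x) c) _.
    rewrite ge_max hfx andbT.
    by rewrite -opprB (absN h0 hz hm hu) key.
  move=> hx; have hs := Vsub _ hx; split => //.
  rewrite /V /cball /=.
  apply: le_trans (ultra_sub h0 hz hm hu (f x) x c) _.
  by rewrite ge_max key //=.
case/(_ Vmeas Vsub Vinv); rewrite Vball hmu -?Vball //.
  move/eqP; rewrite eqe; apply/negP; rewrite gt_eqF //.
  by rewrite divr_gt0 // ?mulr_gt0 ?subr_gt0.
move/eqP; rewrite eqe; apply/negP; rewrite -/rho; apply/eqP => E.
have p2 : (2 : R) <= p%:R by rewrite ler_nat prime_gt1.
have d0 : r * (p%:R - 1) != 0 by rewrite mulf_neq0 // ?gt_eqF // subr_gt0.
have E2 : p%:R * rho = r * (p%:R - 1).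
  by move/(congr1 (fun t => t * (r * (p%:R - 1)))): E; rewrite mul1r divfK.
move: E2; rewrite -rhoE => E2.
have E3 : rho * (p%:R * (p%:R * (p%:R - 1)) - p%:R) = 0.
  apply/eqP; rewrite mulrBr subr_eq0; apply/eqP.
  have -> : rho * (p%:R * (p%:R * (p%:R - 1))) = rho * p%:R ^+ 2 * (p%:R - 1) by ring.
  by rewrite -E2 mulrC.
move/eqP: E3; rewrite mulf_eq0 gt_eqF //= subr_eq0 => /eqP E4.
have : p%:R * (p%:R * (p%:R - 1)) >= p%:R * 2 :> R.
  by rewrite ler_pM2l //; nra.
rewrite E4; nra.
Qed.
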